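(* Let $O_{(4,1)}(x,y,z,w)=x^4z^2w^2+y^4x^2w^2+z^4x^2y^2+w^4y^2z^2-4x^2y^2z^2w^2$, and let $F$ be a real form of degree $8$ in $x,y,z,w$ with $0\le F\le O_{(4,1)}$ pointwise on $\mathbb R^4$. Let $H$ be the part of $F$ consisting of its terms in the monomials $x^4z^2w^2$, $y^4x^2w^2$, $z^4x^2y^2$, $w^4y^2z^2$, $x^2y^2z^2w^2$, i.e. $H=a\,x^4z^2w^2+b\,y^4x^2w^2+c\,z^4x^2y^2+d\,w^4y^2z^2+e\,x^2y^2z^2w^2$ where $a,b,c,d,e$ are the corresponding coefficients of $F$. Then $H=a\,O_{(4,1)}$, with $0\le a\le1$. *)

(* Defs.v *)
From HB Require Import structures.
From mathcomp Require Import all_boot all_order all_algebra.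
From mathcomp Require Import reals.
From mathcomp Require Import mpoly.

Set Implicit Arguments.
Unset Strict Implicit.
Unset Printing Implicit Defensive.

Import Order.TTheory GRing.Theory Num.Theory.
Local Open Scope ring_scope.

(* Monomials (exponent vectors (x,y,z,w)). *)
Definition m_xzw : 'X_{1..4} := [multinom [tuple 4%N; 0%N; 2%N; 2%N]].
Definition m_yxw : 'X_{1..4} := [multinom [tuple 2%N; 4%N; 0%N; 2%N]].
Definition m_zxy : 'X_{1..4} := [multinom [tuple 2%N; 2%N; 4%N; 0%N]].
Definition m_wyz : 'X_{1..4} := [multinom [tuple 0%N; 2%N; 2%N; 4%N]].
Definition m_xyzw : 'X_{1..4} := [multinom [tuple 2%N; 2%N; 2%N; 2%N]].

Definition O41 (R : realType) : {mpoly R[4]} :=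
  let x := 'X_(@Ordinal 4 0 isT) in let y := 'X_(@Ordinal 4 1 isT) in
  let z := 'X_(@Ordinal 4 2 isT) in let w := 'X_(@Ordinal 4 3 isT) in
  x ^+ 4 * z ^+ 2 * w ^+ 2 + y ^+ 4 * x ^+ 2 * w ^+ 2
  + z ^+ 4 * x ^+ 2 * y ^+ 2 + w ^+ 4 * y ^+ 2 * z ^+ 2
  - 4%:R * (x ^+ 2 * y ^+ 2 * z ^+ 2 * w ^+ 2).

Definition Hpart (R : realType) (F : {mpoly R[4]}) : {mpoly R[4]} :=
  F@_m_xzw *: 'X_[m_xzw] + F@_m_yxw *: 'X_[m_yxw] + F@_m_zxy *: 'X_[m_zxy]
  + F@_m_wyz *: 'X_[m_wyz] + F@_m_xyzw *: 'X_[m_xyzw].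

(* Main.v *)
Require Import Defs.
From HB Require Import structures.
From mathcomp Require Import all_boot all_order all_algebra.
From mathcomp Require Import reals.
From mathcomp Require Import mpoly.
From mathcomp Require Import ring lra zify.
Import Order.TTheory GRing.Theory Num.Theory.
Local Open Scope ring_scope.

Lemma small_zero (R : realFieldType) (x C : R) :
  (forall t : R, 0 < t -> t <= 1 -> `|x| <= C * t) -> x = 0.
Proof.
move=> H; apply/eqP; apply/negPn/negP => nx.
have ax : 0 < `|x| by rewrite normr_gt0.
have C1 := H 1 ltr01 (lexx _); rewrite mulr1 in C1.
set D := 2 * C + `|x|.
have D0 : 0 < D by rewrite /D; lra.
have t0 : 0 < `|x| / D by rewrite divr_gt0.
have t1 : `|x| / D <= 1 by rewrite ler_pdivrMr // mul1r /D; lra.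
have := H _ t0 t1.
rewrite mulrA ler_pdivlMr // => h.
have : `|x| * D <= C * `|x| by [].
rewrite /D => h2; nra.
Qed.

Lemma poly_bound (R : realFieldType) (S : {poly R}) (t : R) : 0 <= t -> t <= 1 ->
  `|S.[t]| <= \sum_(i < size S) `|S`_i|.
Proof.
move=> t0 t1; rewrite horner_coef.
apply: (le_trans (ler_norm_sum _ _ _)); apply: ler_sum => i _.
rewrite normrM -{2}[`|S`_i|]mulr1; apply: ler_wpM2l => //.
by rewrite normrX exprn_ile1 ?normr_ge0 // ger0_norm.
Qed.

Lemma low_coef (R : realFieldType) (P : {poly R}) (M : R) (k : nat) :
  (forall t : R, 0 < t -> t <= 1 -> 0 <= P.[t] <= M * t ^+ k) ->
  forall j, (j < k)%N -> P`_j = 0.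
Proof.
move=> H j; elim/ltn_ind: j => j IH jk.
have tk : take_poly j P = 0.
  apply/polyP => i; rewrite coef_take_poly coef0.
  by case: ifP => // ij; apply: IH => //; apply: ltn_trans jk.
set Q := drop_poly j P.
have PE : P = Q * 'X^j by rewrite -[LHS](poly_take_drop j) tk add0r.
set Q' := drop_poly 1 Q.
have QE : Q = (Q`_0)%:P + Q' * 'X.
  rewrite -[LHS](poly_take_drop 1) expr1; congr (_ + _).
  apply/polyP => i; rewrite coef_take_poly coefC; case: i => //.
have Q0 : Q`_0 = P`_j by rewrite coef_drop_poly.
rewrite -Q0.
set B := \sum_(i < size Q') `|Q'`_i|.
apply: (@small_zero R (Q`_0) (`|M| + B)) => t t0 t1.
have /andP [h1 h2] := H t t0 t1.
have tj : 0 < t ^+ j by rewrite exprn_gt0.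
have PtE : P.[t] = (Q`_0 + t * Q'.[t]) * t ^+ j.
  by rewrite {1}PE hornerM hornerXn {1}QE hornerD hornerC hornerM hornerX [t * _]mulrC.
have hb := @poly_bound R Q' t (ltW t0) t1.
have hn : `|Q'.[t]| <= B by [].
have tk1 : t ^+ k <= t ^+ j * t.
  by rewrite -exprSr; apply: (ler_wiXn2l (ltW t0) t1).
have Mt : M * t ^+ k <= `|M| * (t ^+ j * t).
  apply: (le_trans (ler_norm _)); rewrite normrM (ger0_norm (exprn_ge0 _ (ltW t0))).
  exact: ler_wpM2l.
rewrite PtE in h1 h2.
have u1 : 0 <= Q`_0 + t * Q'.[t] by rewrite -(pmulr_lge0 _ tj).
have u2 : Q`_0 + t * Q'.[t] <= `|M| * t.
  rewrite -(ler_pM2r tj) -mulrA [t * t ^+ j]mulrC.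
  exact: le_trans h2 Mt.
have v1 : `|t * Q'.[t]| <= B * t.
  rewrite normrM (ger0_norm (ltW t0)) mulrC.
  by apply: ler_wpM2r => //; apply: ltW.
move: v1; rewrite ler_norml => /andP [v1 v2].
rewrite ler_norml; apply/andP; split; lra.
Qed.


Set Implicit Arguments.
Unset Strict Implicit.
Unset Printing Implicit Defensive.
Local Open Scope ring_scope.

Definition i0 : 'I_4 := @Ordinal 4 0 isT.
Definition i1 : 'I_4 := @Ordinal 4 1 isT.
Definition i2 : 'I_4 := @Ordinal 4 2 isT.
Definition i3 : 'I_4 := @Ordinal 4 3 isT.

Lemma ord4P (i : 'I_4) : i = i0 \/ i = i1 \/ i = i2 \/ i = i3.
Proof.
case: i => [[|[|[|[|n]]]] Hn].
- by left; apply: val_inj.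
- by right; left; apply: val_inj.
- by right; right; left; apply: val_inj.
- by right; right; right; apply: val_inj.
- by [].
Qed.

Lemma big4 (T : Type) (idx : T) (op : Monoid.com_law idx) (f : 'I_4 -> T) :
  \big[op/idx]_(i < 4) f i = op (op (op (f i0) (f i1)) (f i2)) (f i3).
Proof.
rewrite !big_ord_recl big_ord0 Monoid.mulm1 !Monoid.mulmA.
by congr (op (op (op (f _) (f _)) (f _)) (f _)); apply: val_inj.
Qed.

Definition mk4 (a b c d : nat) : 'X_{1..4} := [multinom [tuple a; b; c; d]].

Definition evk (k : nat) (m : 'X_{1..4}) : bool :=
  [forall i : 'I_4, (i < k)%N ==> ~~ odd (m i)].

Definition wt (q : 'I_4 -> nat) (m : 'X_{1..4}) : nat := (\sum_i q i * m i)%N.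

Definition qf (q0 q1 q2 q3 : nat) : 'I_4 -> nat := fun i => nth 0%N [:: q0; q1; q2; q3] i.

Lemma qfE q0 q1 q2 q3 : (qf q0 q1 q2 q3 i0 = q0) * (qf q0 q1 q2 q3 i1 = q1)
  * (qf q0 q1 q2 q3 i2 = q2) * (qf q0 q1 q2 q3 i3 = q3).
Proof. by []. Qed.

Lemma wtE q m : wt q m = (q i0 * m i0 + q i1 * m i1 + q i2 * m i2 + q i3 * m i3)%N.
Proof. by rewrite /wt big4. Qed.

Lemma mdeg4 (m : 'X_{1..4}) : mdeg m = (m i0 + m i1 + m i2 + m i3)%N.
Proof. by rewrite mdegE big4. Qed.

Lemma evk4E m : evk 4 m = [&& ~~ odd (m i0), ~~ odd (m i1), ~~ odd (m i2) & ~~ odd (m i3)].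
Proof.
apply/forallP/and4P => [H|[h0 h1 h2 h3] i].
  by split; [exact: H i0 | exact: H i1 | exact: H i2 | exact: H i3].
by case: (ord4P i) => [->|[->|[->|->]]].
Qed.

Lemma evk0 m : evk 0 m.
Proof. by apply/forallP => i. Qed.

Lemma evkS (k : 'I_4) m : evk k.+1 m = evk k m && ~~ odd (m k).
Proof.
apply/forallP/andP => [H|[/forallP H1 H2] i].
  split; last by have := H k; rewrite ltnSn.
  by apply/forallP => i; apply/implyP => ik; have := H i; rewrite ltnS (ltnW ik).
apply/implyP; rewrite ltnS leq_eqVlt => /orP [/eqP/val_inj -> //|ik].
by have := H1 i; rewrite ik.
Qed.

Lemma mon4 (R : comRingType) (v : 'I_4 -> R) (m : 'X_{1..4}) :
  \prod_(i < 4) v i ^+ m i = v i0 ^+ m i0 * v i1 ^+ m i1 * v i2 ^+ m i2 * v i3 ^+ m i3.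
Proof. by rewrite big4. Qed.

Lemma O41_mon (R : realType) : O41 R =
  'X_[m_xzw] + 'X_[m_yxw] + 'X_[m_zxy] + 'X_[m_wyz] - 4%:R *: 'X_[m_xyzw].
Proof.
rewrite /O41 !mpolyXn -!mpolyXD scaler_nat mulr_natl.
have E (m1 m2 : 'X_{1..4}) : m1 =1 m2 -> 'X_[m1] = 'X_[m2] :> {mpoly R[4]} by move/mnmP ->.
by congr (_ + _ + _ + _ - _ *+ 4); apply: E => i;
  rewrite !mnmDE ?mulmnE !mnm1E; case: (ord4P i) => [->|[->|[->|->]]].
Qed.

Lemma mk4_0 a b c d : mk4 a b c d i0 = a. Proof. by []. Qed.
Lemma mk4_1 a b c d : mk4 a b c d i1 = b. Proof. by []. Qed.
Lemma mk4_2 a b c d : mk4 a b c d i2 = c. Proof. by []. Qed.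
Lemma mk4_3 a b c d : mk4 a b c d i3 = d. Proof. by []. Qed.
Definition mk4E := (mk4_0, mk4_1, mk4_2, mk4_3).
Lemma m5E : (m_xzw = mk4 4 0 2 2) * (m_yxw = mk4 2 4 0 2) * (m_zxy = mk4 2 2 4 0)
  * (m_wyz = mk4 0 2 2 4) * (m_xyzw = mk4 2 2 2 2).
Proof. by []. Qed.

Notation mon v m := (\prod_(i < 4) v i ^+ m i).

Lemma O41_eval (R : realType) (v : 'I_4 -> R) : (O41 R).@[v] =
  mon v m_xzw + mon v m_yxw + mon v m_zxy + mon v m_wyz - 4%:R * mon v m_xyzw.
Proof. by rewrite O41_mon mevalB !mevalD mevalZ !mevalX. Qed.

Lemma O41_eval' (R : realType) (v : 'I_4 -> R) : (O41 R).@[v] =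
  v i0 ^+ 4 * v i2 ^+ 2 * v i3 ^+ 2 + v i1 ^+ 4 * v i0 ^+ 2 * v i3 ^+ 2
  + v i2 ^+ 4 * v i0 ^+ 2 * v i1 ^+ 2 + v i3 ^+ 4 * v i1 ^+ 2 * v i2 ^+ 2
  - 4%:R * (v i0 ^+ 2 * v i1 ^+ 2 * v i2 ^+ 2 * v i3 ^+ 2).
Proof.
rewrite O41_eval !mon4 !m5E !mk4E !expr0 !mulr1 !mul1r.
ring.
Qed.

Definition Fk (R : realType) (F : {mpoly R[4]}) (k : nat) : {mpoly R[4]} :=
  \sum_(m <- msupp F | evk k m) F@_m *: 'X_[m].

Lemma Fk_eval (R : realType) (F : {mpoly R[4]}) k v :
  (Fk F k).@[v] = \sum_(m <- msupp F | evk k m) F@_m * mon v m.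
Proof.
rewrite /Fk (big_morph (meval v) (mevalD v) (meval0 v)).
by apply: eq_bigr => m _; rewrite mevalZ mevalX.
Qed.

Definition flip (R : ringType) (k : 'I_4) (v : 'I_4 -> R) : 'I_4 -> R :=
  fun i => if i == k then - v i else v i.

Lemma mon_flip (R : comRingType) k (v : 'I_4 -> R) (m : 'X_{1..4}) :
  mon (flip k v) m = (-1) ^+ (m k) * mon v m.
Proof.
rewrite (bigD1 k) //= [in RHS](bigD1 k) //= /flip eqxx [(- v k) ^+ _]exprNn -mulrA.
by congr (_ * (_ * _)); apply: eq_bigr => i /negbTE ->.
Qed.

Lemma Fk_step (R : realType) (F : {mpoly R[4]}) (k : 'I_4) v :
  (Fk F k.+1).@[v] = ((Fk F k).@[v] + (Fk F k).@[flip k v]) / 2.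
Proof.
rewrite !Fk_eval -big_split /= mulr_suml.
rewrite (eq_bigl (fun m => evk k m && ~~ odd (m k))); last by move=> m; rewrite evkS.
rewrite big_mkcondr; apply: eq_bigr => m _; rewrite mon_flip -signr_odd.
by case: (odd (m k)) => /=; rewrite ?expr0 ?expr1; field.
Qed.

Lemma Fk0 (R : realType) (F : {mpoly R[4]}) : Fk F 0 = F.
Proof.
rewrite /Fk (eq_bigl xpredT); last by move=> m; rewrite evk0.
by rewrite -mpolyE.
Qed.

Lemma m5_even k : [/\ ~~ odd (m_xzw k), ~~ odd (m_yxw k), ~~ odd (m_zxy k),
  ~~ odd (m_wyz k) & ~~ odd (m_xyzw k)].
Proof. by case: (ord4P k) => [->|[->|[->|->]]]. Qed.

Lemma O41_flip (R : realType) k (v : 'I_4 -> R) : (O41 R).@[flip k v] = (O41 R).@[v].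
Proof.
have ev m : ~~ odd (m k) -> (-1) ^+ (m k) = 1 :> R by move=> h; rewrite -signr_odd (negbTE h).
case: (m5_even k) => h1 h2 h3 h4 h5.
by rewrite !O41_eval !mon_flip !ev ?mul1r.
Qed.

Lemma Fk_bounds (R : realType) (F : {mpoly R[4]})
  (hF : forall v, 0 <= F.@[v] /\ F.@[v] <= (O41 R).@[v]) k :
  (k <= 4)%N -> forall v, 0 <= (Fk F k).@[v] <= (O41 R).@[v].
Proof.
elim: k => [_ v|k IH kl v]; first by rewrite Fk0; case: (hF v) => -> ->.
have kl' : (k < 4)%N by [].
have -> : Fk F k.+1 = Fk F (Ordinal kl').+1 by [].
rewrite Fk_step /=.
have /andP [a1 a2] := IH (ltnW kl) v.
have /andP [b1 b2] := IH (ltnW kl) (flip (Ordinal kl') v).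
rewrite O41_flip in b2.
apply/andP; split; lra.
Qed.


Lemma coefF (R : realType) (F : {mpoly R[4]}) m0 :
  F@_m0 = \sum_(m <- msupp F) F@_m * (m == m0)%:R.
Proof.
rewrite {1}(mpolyE F) raddf_sum.
by apply: eq_bigr => m _ /=; rewrite mcoeffZ mcoeffX.
Qed.

Lemma mon_torus (R : realType) (t : R) (q : 'I_4 -> nat) (m : 'X_{1..4}) :
  mon (fun i => t ^+ q i) m = t ^+ wt q m.
Proof. by rewrite /wt -prodrXr; apply: eq_bigr => i _; rewrite -exprM. Qed.

Lemma kill (R : realType) (F : {mpoly R[4]}) (hom : F \is 8.-homog)
  (hF : forall v, 0 <= F.@[v] /\ F.@[v] <= (O41 R).@[v])
  (q : 'I_4 -> nat) (m0 : 'X_{1..4}) :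
  evk 4 m0 ->
  (wt q m0 < wt q m_xzw)%N -> (wt q m0 < wt q m_yxw)%N ->
  (wt q m0 < wt q m_zxy)%N -> (wt q m0 < wt q m_wyz)%N ->
  (forall m : 'X_{1..4}, mdeg m = 8%N -> evk 4 m -> wt q m = wt q m0 -> m = m0) ->
  F@_m0 = 0.
Proof.
move=> ev0 w1 w2 w3 w4 uq.
set P : {poly R} := \sum_(m <- msupp F | evk 4 m) F@_m *: 'X^(wt q m).
have Pev t : P.[t] = (Fk F 4).@[fun i => t ^+ q i].
  rewrite Fk_eval horner_sum; apply: eq_bigr => m _.
  by rewrite hornerZ hornerXn mon_torus.
have Pc : P`_(wt q m0) = F@_m0.
  rewrite coef_sum coefF big_mkcond /=; apply: eq_big_seq => m mF.
  rewrite coefZ coefXn.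
  case: (eqVneq m m0) => [->|ne]; first by rewrite ev0 eqxx.
  rewrite mulr0; case: ifP => // em.
  suff -> : (wt q m0 == wt q m) = false by rewrite mulr0.
  apply/negbTE/eqP => e; move/eqP: ne; apply; apply: uq => //.
  exact: (dhomog_mf hom mF).
rewrite -Pc; apply: (@low_coef R P 4%:R (wt q m0).+1) => // t t0 t1.
rewrite Pev; have /andP [h1 h2] := Fk_bounds hF (leqnn 4) (fun i => t ^+ q i).
rewrite h1 /=; apply: le_trans h2 _.
rewrite O41_eval !mon_torus.
have le w : (wt q m0 < w)%N -> t ^+ w <= t ^+ (wt q m0).+1.
  by move=> h; apply: (ler_wiXn2l (ltW t0) t1).
have := le _ w1; have := le _ w2; have := le _ w3; have := le _ w4.
have : 0 <= t ^+ wt q m_xyzw by rewrite exprn_ge0 // ltW.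
lra.
Qed.

Lemma kill4 (R : realType) (F : {mpoly R[4]}) (hom : F \is 8.-homog)
  (hF : forall v, 0 <= F.@[v] /\ F.@[v] <= (O41 R).@[v])
  (q0 q1 q2 q3 a b c d : nat) :
  (q0 * a + q1 * b + q2 * c + q3 * d < q0 * 2 + q1 * 0 + q2 * 1 + q3 * 1)%N ->
  (q0 * a + q1 * b + q2 * c + q3 * d < q0 * 1 + q1 * 2 + q2 * 0 + q3 * 1)%N ->
  (q0 * a + q1 * b + q2 * c + q3 * d < q0 * 1 + q1 * 1 + q2 * 2 + q3 * 0)%N ->
  (q0 * a + q1 * b + q2 * c + q3 * d < q0 * 0 + q1 * 1 + q2 * 1 + q3 * 2)%N ->
  (forall x y z u : nat, (x + y + z + u = 4)%N ->
     (q0 * x + q1 * y + q2 * z + q3 * u = q0 * a + q1 * b + q2 * c + q3 * d)%N ->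
     [/\ x = a, y = b, z = c & u = d]) ->
  F@_(mk4 a.*2 b.*2 c.*2 d.*2) = 0.
Proof.
move=> w1 w2 w3 w4 uq.
apply: (kill hom hF (q := qf q0 q1 q2 q3)).
- by rewrite evk4E !mk4E !odd_double.
- by rewrite !wtE m5E !mk4E !qfE; rewrite -!muln2; nia.
- by rewrite !wtE m5E !mk4E !qfE; rewrite -!muln2; nia.
- by rewrite !wtE m5E !mk4E !qfE; rewrite -!muln2; nia.
- by rewrite !wtE m5E !mk4E !qfE; rewrite -!muln2; nia.
move=> m; rewrite mdeg4 evk4E !wtE !mk4E !qfE => hd /and4P [e0 e1 e2 e3] hw.
have h i : ~~ odd (m i) -> m i = ((m i)./2).*2.
  by move=> hi; rewrite -{1}(odd_double_half (m i)) (negbTE hi).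
move: hd hw; rewrite (h _ e0) (h _ e1) (h _ e2) (h _ e3) -!muln2 => hd hw.
have [||x1 x2 x3 x4] := uq ((m i0)./2) ((m i1)./2) ((m i2)./2) ((m i3)./2); try lia.
have H0 : m i0 = (a * 2)%N by rewrite (h _ e0) x1 muln2.
have H1 : m i1 = (b * 2)%N by rewrite (h _ e1) x2 muln2.
have H2 : m i2 = (c * 2)%N by rewrite (h _ e2) x3 muln2.
have H3 : m i3 = (d * 2)%N by rewrite (h _ e3) x4 muln2.
by apply/mnmP => i; case: (ord4P i) => [->|[->|[->|->]]]; rewrite !mk4E.
Qed.
Definition goodb (x y z u : nat) : bool :=
  [|| (x, y, z, u) == (2, 0, 1, 1)%N, (x, y, z, u) == (1, 2, 0, 1)%N,
      (x, y, z, u) == (1, 1, 2, 0)%N, (x, y, z, u) == (0, 1, 1, 2)%N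
    | (x, y, z, u) == (1, 1, 1, 1)%N].

Lemma even_zero (R : realType) (F : {mpoly R[4]}) (hom : F \is 8.-homog)
  (hF : forall v, 0 <= F.@[v] /\ F.@[v] <= (O41 R).@[v]) (x y z u : nat) :
  (x + y + z + u = 4)%N -> ~~ goodb x y z u ->
  F@_(mk4 x.*2 y.*2 z.*2 u.*2) = 0.
Proof.
have K0004 : F@_(mk4 0.*2 0.*2 0.*2 4.*2) = 0.
  by apply: (kill4 hom hF (q0 := 0) (q1 := 5) (q2 := 5) (q3 := 1)) => // x' y' z' u' h1 h2; split; lia.
have K0013 : F@_(mk4 0.*2 0.*2 1.*2 3.*2) = 0.
  by apply: (kill4 hom hF (q0 := 1) (q1 := 6) (q2 := 5) (q3 := 0)) => // x' y' z' u' h1 h2; split; lia.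
have K0022 : F@_(mk4 0.*2 0.*2 2.*2 2.*2) = 0.
  by apply: (kill4 hom hF (q0 := 3) (q1 := 3) (q2 := 0) (q3 := 1)) => // x' y' z' u' h1 h2; split; lia.
have K0031 : F@_(mk4 0.*2 0.*2 3.*2 1.*2) = 0.
  by apply: (kill4 hom hF (q0 := 1) (q1 := 6) (q2 := 0) (q3 := 5)) => // x' y' z' u' h1 h2; split; lia.
have K0040 : F@_(mk4 0.*2 0.*2 4.*2 0.*2) = 0.
  by apply: (kill4 hom hF (q0 := 0) (q1 := 5) (q2 := 1) (q3 := 5)) => // x' y' z' u' h1 h2; split; lia.
have K0103 : F@_(mk4 0.*2 1.*2 0.*2 3.*2) = 0.
  by apply: (kill4 hom hF (q0 := 1) (q1 := 5) (q2 := 6) (q3 := 0)) => // x' y' z' u' h1 h2; split; lia.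
have K0121 : F@_(mk4 0.*2 1.*2 2.*2 1.*2) = 0.
  by apply: (kill4 hom hF (q0 := 4) (q1 := 2) (q2 := 0) (q3 := 3)) => // x' y' z' u' h1 h2; split; lia.
have K0130 : F@_(mk4 0.*2 1.*2 3.*2 0.*2) = 0.
  by apply: (kill4 hom hF (q0 := 1) (q1 := 5) (q2 := 0) (q3 := 6)) => // x' y' z' u' h1 h2; split; lia.
have K0202 : F@_(mk4 0.*2 2.*2 0.*2 2.*2) = 0.
  by apply: (kill4 hom hF (q0 := 2) (q1 := 5) (q2 := 7) (q3 := 0)) => // x' y' z' u' h1 h2; split; lia.
have K0211 : F@_(mk4 0.*2 2.*2 1.*2 1.*2) = 0.
  by apply: (kill4 hom hF (q0 := 4) (q1 := 0) (q2 := 2) (q3 := 3)) => // x' y' z' u' h1 h2; split; lia.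
have K0220 : F@_(mk4 0.*2 2.*2 2.*2 0.*2) = 0.
  by apply: (kill4 hom hF (q0 := 3) (q1 := 0) (q2 := 1) (q3 := 3)) => // x' y' z' u' h1 h2; split; lia.
have K0301 : F@_(mk4 0.*2 3.*2 0.*2 1.*2) = 0.
  by apply: (kill4 hom hF (q0 := 1) (q1 := 0) (q2 := 6) (q3 := 5)) => // x' y' z' u' h1 h2; split; lia.
have K0310 : F@_(mk4 0.*2 3.*2 1.*2 0.*2) = 0.
  by apply: (kill4 hom hF (q0 := 1) (q1 := 0) (q2 := 5) (q3 := 6)) => // x' y' z' u' h1 h2; split; lia.
have K0400 : F@_(mk4 0.*2 4.*2 0.*2 0.*2) = 0.
  by apply: (kill4 hom hF (q0 := 0) (q1 := 1) (q2 := 5) (q3 := 5)) => // x' y' z' u' h1 h2; split; lia.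
have K1003 : F@_(mk4 1.*2 0.*2 0.*2 3.*2) = 0.
  by apply: (kill4 hom hF (q0 := 0) (q1 := 4) (q2 := 4) (q3 := 1)) => // x' y' z' u' h1 h2; split; lia.
have K1012 : F@_(mk4 1.*2 0.*2 1.*2 2.*2) = 0.
  by apply: (kill4 hom hF (q0 := 1) (q1 := 6) (q2 := 4) (q3 := 0)) => // x' y' z' u' h1 h2; split; lia.
have K1021 : F@_(mk4 1.*2 0.*2 2.*2 1.*2) = 0.
  by apply: (kill4 hom hF (q0 := 1) (q1 := 6) (q2 := 0) (q3 := 4)) => // x' y' z' u' h1 h2; split; lia.
have K1030 : F@_(mk4 1.*2 0.*2 3.*2 0.*2) = 0.
  by apply: (kill4 hom hF (q0 := 0) (q1 := 4) (q2 := 1) (q3 := 4)) => // x' y' z' u' h1 h2; split; lia.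
have K1102 : F@_(mk4 1.*2 1.*2 0.*2 2.*2) = 0.
  by apply: (kill4 hom hF (q0 := 0) (q1 := 3) (q2 := 6) (q3 := 1)) => // x' y' z' u' h1 h2; split; lia.
have K1210 : F@_(mk4 1.*2 2.*2 1.*2 0.*2) = 0.
  by apply: (kill4 hom hF (q0 := 0) (q1 := 1) (q2 := 3) (q3 := 6)) => // x' y' z' u' h1 h2; split; lia.
have K1300 : F@_(mk4 1.*2 3.*2 0.*2 0.*2) = 0.
  by apply: (kill4 hom hF (q0 := 0) (q1 := 1) (q2 := 4) (q3 := 4)) => // x' y' z' u' h1 h2; split; lia.
have K2002 : F@_(mk4 2.*2 0.*2 0.*2 2.*2) = 0.
  by apply: (kill4 hom hF (q0 := 0) (q1 := 3) (q2 := 3) (q3 := 1)) => // x' y' z' u' h1 h2; split; lia.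
have K2020 : F@_(mk4 2.*2 0.*2 2.*2 0.*2) = 0.
  by apply: (kill4 hom hF (q0 := 0) (q1 := 2) (q2 := 5) (q3 := 7)) => // x' y' z' u' h1 h2; split; lia.
have K2101 : F@_(mk4 2.*2 1.*2 0.*2 1.*2) = 0.
  by apply: (kill4 hom hF (q0 := 0) (q1 := 1) (q2 := 6) (q3 := 4)) => // x' y' z' u' h1 h2; split; lia.
have K2110 : F@_(mk4 2.*2 1.*2 1.*2 0.*2) = 0.
  by apply: (kill4 hom hF (q0 := 0) (q1 := 1) (q2 := 4) (q3 := 6)) => // x' y' z' u' h1 h2; split; lia.
have K2200 : F@_(mk4 2.*2 2.*2 0.*2 0.*2) = 0.
  by apply: (kill4 hom hF (q0 := 0) (q1 := 1) (q2 := 3) (q3 := 3)) => // x' y' z' u' h1 h2; split; lia.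
have K3001 : F@_(mk4 3.*2 0.*2 0.*2 1.*2) = 0.
  by apply: (kill4 hom hF (q0 := 0) (q1 := 1) (q2 := 6) (q3 := 5)) => // x' y' z' u' h1 h2; split; lia.
have K3010 : F@_(mk4 3.*2 0.*2 1.*2 0.*2) = 0.
  by apply: (kill4 hom hF (q0 := 0) (q1 := 1) (q2 := 5) (q3 := 6)) => // x' y' z' u' h1 h2; split; lia.
have K3100 : F@_(mk4 3.*2 1.*2 0.*2 0.*2) = 0.
  by apply: (kill4 hom hF (q0 := 0) (q1 := 1) (q2 := 2) (q3 := 2)) => // x' y' z' u' h1 h2; split; lia.
have K4000 : F@_(mk4 4.*2 0.*2 0.*2 0.*2) = 0.
  by apply: (kill4 hom hF (q0 := 0) (q1 := 1) (q2 := 1) (q3 := 1)) => // x' y' z' u' h1 h2; split; lia.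
move=> hs hg.
case: x hs hg => [|[|[|[|[|x]]]]]; case: y => [|[|[|[|[|y]]]]]; case: z => [|[|[|[|[|z]]]]];
  case: u => [|[|[|[|[|u]]]]] => hs hg; first [discriminate hs | discriminate hg | assumption].
Qed.

Lemma Fk_coef (R : realType) (F : {mpoly R[4]}) k m :
  (Fk F k)@_m = if evk k m then F@_m else 0.
Proof.
rewrite /Fk raddf_sum /=.
under eq_bigr do rewrite mcoeffZ mcoeffX.
case: ifP => ev.
  rewrite coefF big_mkcond /=; apply: eq_bigr => m' _.
  by case: (eqVneq m' m) => [->|_]; rewrite ?ev ?mulr0 //; case: ifP.
apply: big1 => m' ev'; case: (eqVneq m' m) => [e|_]; last by rewrite mulr0.
by move: ev'; rewrite e ev.
Qed.

Lemma Hpart_coef (R : realType) (F : {mpoly R[4]}) m :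
  (Hpart F)@_m = F@_m_xzw * (m_xzw == m)%:R + F@_m_yxw * (m_yxw == m)%:R
    + F@_m_zxy * (m_zxy == m)%:R + F@_m_wyz * (m_wyz == m)%:R
    + F@_m_xyzw * (m_xyzw == m)%:R.
Proof. by rewrite /Hpart !mcoeffD !mcoeffZ !mcoeffX. Qed.

Lemma test2 : evk 4 m_xzw.
Proof. by rewrite evk4E m5E !mk4E. Qed.

Lemma m5_ne : ((m_xzw == m_yxw) = false) * ((m_xzw == m_zxy) = false) * ((m_xzw == m_wyz) = false) * ((m_xzw == m_xyzw) = false) * ((m_yxw == m_xzw) = false) * ((m_yxw == m_zxy) = false) * ((m_yxw == m_wyz) = false) * ((m_yxw == m_xyzw) = false) * ((m_zxy == m_xzw) = false) * ((m_zxy == m_yxw) = false) * ((m_zxy == m_wyz) = false) * ((m_zxy == m_xyzw) = false) * ((m_wyz == m_xzw) = false) * ((m_wyz == m_yxw) = false) * ((m_wyz == m_zxy) = false) * ((m_wyz == m_xyzw) = false) * ((m_xyzw == m_xzw) = false) * ((m_xyzw == m_yxw) = false) * ((m_xyzw == m_zxy) = false) * ((m_xyzw == m_wyz) = false).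
Proof. by []. Qed.

Lemma m5_ev : (evk 4 m_xzw * evk 4 m_yxw * evk 4 m_zxy * evk 4 m_wyz * evk 4 m_xyzw)%type.
Proof. by rewrite !evk4E !m5E !mk4E. Qed.

Lemma Fev_H (R : realType) (F : {mpoly R[4]}) (hom : F \is 8.-homog)
  (hF : forall v, 0 <= F.@[v] /\ F.@[v] <= (O41 R).@[v]) :
  Fk F 4 = Hpart F.
Proof.
apply/mpolyP => m; rewrite Fk_coef Hpart_coef.
have [->|n1] := eqVneq m m_xzw; first by rewrite m5_ev ?m5_ne /=; ring.
have [->|n2] := eqVneq m m_yxw; first by rewrite m5_ev ?m5_ne /=; ring.
have [->|n3] := eqVneq m m_zxy; first by rewrite m5_ev ?m5_ne /=; ring.
have [->|n4] := eqVneq m m_wyz; first by rewrite m5_ev ?m5_ne /=; ring.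
have [->|n5] := eqVneq m m_xyzw; first by rewrite m5_ev ?m5_ne /=; ring.
rewrite !mulr0 !addr0; case: ifP => // ev.
have [d8|dn] := eqVneq (mdeg m) 8%N; last exact: (dhomog_nemf_coeff hom dn).
move: ev; rewrite evk4E => /and4P [e0 e1 e2 e3].
have h i : ~~ odd (m i) -> m i = ((m i)./2).*2.
  by move=> hi; rewrite -{1}(odd_double_half (m i)) (negbTE hi).
have mE : m = mk4 ((m i0)./2).*2 ((m i1)./2).*2 ((m i2)./2).*2 ((m i3)./2).*2.
  by apply/mnmP => i; case: (ord4P i) => [->|[->|[->|->]]]; rewrite !mk4E; apply: h.
rewrite mE; apply: even_zero => //.
  by move: d8; rewrite mdeg4 (h _ e0) (h _ e1) (h _ e2) (h _ e3); lia.
apply/negP; rewrite /goodb => /orP [|/orP [|/orP [|/orP [|]]]] /eqP [] ha hb hc hd.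
- by move/eqP: n1; apply; rewrite mE ha hb hc hd.
- by move/eqP: n2; apply; rewrite mE ha hb hc hd.
- by move/eqP: n3; apply; rewrite mE ha hb hc hd.
- by move/eqP: n4; apply; rewrite mE ha hb hc hd.
- by move/eqP: n5; apply; rewrite mE ha hb hc hd.
Qed.

Lemma key (R : realType) (p r : R) :
  (forall s : R, 0 <= p * s ^+ 4 - (p + r) * s ^+ 2 + r) -> p = r.
Proof.
move=> H; apply/eqP; rewrite -subr_eq0; apply/eqP.
apply: (@small_zero R (p - r) (3 * `|p|)) => h h0 h1.
have E s : p * s ^+ 4 - (p + r) * s ^+ 2 + r = (s ^+ 2 - 1) * (p * s ^+ 2 - r) by ring.
have A := H (1 + h); have B := H (1 - h); rewrite E in A; rewrite E in B.
have pa : 0 < (1 + h) ^+ 2 - 1 by nra.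
have nb : (1 - h) ^+ 2 - 1 < 0 by nra.
have A' : 0 <= p * (1 + h) ^+ 2 - r by rewrite -(pmulr_rge0 _ pa).
have B' : p * (1 - h) ^+ 2 - r <= 0.
  by rewrite leNgt; apply/negP => hb; move: B; rewrite leNgt; apply/negP/negPn; rewrite nmulr_rlt0.
have := lexx `|p|; rewrite ler_norml => /andP [np' np].
have k1 : p * h <= `|p| * h by apply: ler_wpM2r => //; apply: ltW.
have k2 : - `|p| * h <= p * h by apply: ler_wpM2r => //; apply: ltW.
have h2 : 0 <= h ^+ 2 by apply: sqr_ge0.
have k3 : p * h ^+ 2 <= `|p| * h ^+ 2 by apply: ler_wpM2r.
have k4 : - `|p| * h ^+ 2 <= p * h ^+ 2 by apply: ler_wpM2r.
have k5 : `|p| * h ^+ 2 <= `|p| * h.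
  by apply: ler_wpM2l => //; nra.
have e1 : p * (1 + h) ^+ 2 = p + 2 * (p * h) + p * h ^+ 2 by ring.
have e2 : p * (1 - h) ^+ 2 = p - 2 * (p * h) + p * h ^+ 2 by ring.
rewrite e1 in A'; rewrite e2 in B'.
rewrite ler_norml; apply/andP; split; lra.
Qed.

Definition pt (R : realType) (x y z w : R) : 'I_4 -> R := fun i => nth 0 [:: x; y; z; w] i.

Lemma monpt (R : realType) (x y z w : R) (m : 'X_{1..4}) :
  mon (pt x y z w) m = x ^+ m i0 * y ^+ m i1 * z ^+ m i2 * w ^+ m i3.
Proof. by rewrite mon4. Qed.

Theorem lemma2 (R : realType) (F : {mpoly R[4]}) :
  F \is 8.-homog ->
  (forall v : 'I_4 -> R, 0 <= F.@[v] /\ F.@[v] <= (O41 R).@[v]) ->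
  Hpart F = F@_m_xzw *: O41 R /\ 0 <= F@_m_xzw <= 1.
Proof.
move=> hom hF.
have HB v : 0 <= (Hpart F).@[v] <= (O41 R).@[v].
  by rewrite -(Fev_H hom hF); exact: (Fk_bounds hF (leqnn 4) v).
set a := F@_m_xzw; set b := F@_m_yxw; set c := F@_m_zxy; set d := F@_m_wyz;
  set e := F@_m_xyzw.
have HE x y z w : (Hpart F).@[pt x y z w] =
  a * (x ^+ 4 * z ^+ 2 * w ^+ 2) + b * (y ^+ 4 * x ^+ 2 * w ^+ 2)
  + c * (z ^+ 4 * x ^+ 2 * y ^+ 2) + d * (w ^+ 4 * y ^+ 2 * z ^+ 2)
  + e * (x ^+ 2 * y ^+ 2 * z ^+ 2 * w ^+ 2).
  rewrite /Hpart !mevalD !mevalZ !mevalX !monpt !m5E !mk4E; ring.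
have OE x y z w : (O41 R).@[pt x y z w] =
  x ^+ 4 * z ^+ 2 * w ^+ 2 + y ^+ 4 * x ^+ 2 * w ^+ 2
  + z ^+ 4 * x ^+ 2 * y ^+ 2 + w ^+ 4 * y ^+ 2 * z ^+ 2
  - 4%:R * (x ^+ 2 * y ^+ 2 * z ^+ 2 * w ^+ 2).
  by rewrite O41_eval'.
have B x y z w : 0 <=
  a * (x ^+ 4 * z ^+ 2 * w ^+ 2) + b * (y ^+ 4 * x ^+ 2 * w ^+ 2)
  + c * (z ^+ 4 * x ^+ 2 * y ^+ 2) + d * (w ^+ 4 * y ^+ 2 * z ^+ 2)
  + e * (x ^+ 2 * y ^+ 2 * z ^+ 2 * w ^+ 2) <=
  x ^+ 4 * z ^+ 2 * w ^+ 2 + y ^+ 4 * x ^+ 2 * w ^+ 2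
  + z ^+ 4 * x ^+ 2 * y ^+ 2 + w ^+ 4 * y ^+ 2 * z ^+ 2
  - 4%:R * (x ^+ 2 * y ^+ 2 * z ^+ 2 * w ^+ 2).
  by rewrite -HE -OE.
have ee : e = - (a + b + c + d).
  have := B 1 1 1 1; rewrite !expr1n !mulr1 => /andP [h1 h2]; lra.
have ad : a = d.
  apply: key => s; have /andP [h _] := B s 1 1 1.
  by rewrite ee !expr1n in h; apply: (le_trans h); rewrite le_eqVlt; apply/orP; left; apply/eqP; ring.
have ba : b = a.
  apply: key => s; have /andP [h _] := B 1 s 1 1.
  by rewrite ee !expr1n in h; apply: (le_trans h); rewrite le_eqVlt; apply/orP; left; apply/eqP; ring.
have cb : c = b.
  apply: key => s; have /andP [h _] := B 1 1 s 1.
  by rewrite ee !expr1n in h; apply: (le_trans h); rewrite le_eqVlt; apply/orP; left; apply/eqP; ring.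
split.
  rewrite /Hpart -/a -/b -/c -/d -/e O41_mon ee -ad cb ba.
  rewrite scalerBr !scalerDr scalerA -scaleNr; congr (_ + _); congr (_ *: _).
  by rewrite mulr_natr; ring.
have := B 2 1 1 1; rewrite ee -ad cb ba !expr1n !mulr1 => /andP [h1 h2].
apply/andP; split; nra.
Qed.
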